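(* Let $(\Sigma^{(n)})_{n\ge1}$ be a sequence of positive semidefinite matrices (of dimensions $d_n\times d_n$). Suppose that for each $n$ there is a covariance splitting $\Sigma^{(n)}=\Sigma_1\oplus\Sigma_2$ such that, as $n\to\infty$, $$\operatorname{rank}(\Sigma_1)=o(n),\qquad \operatorname{Tr}\Sigma_2=o(n),\qquad \frac{(\operatorname{Tr}\Sigma_2)^2}{\operatorname{Tr}(\Sigma_2^2)}=\omega(n).$$ Then for each $n$ there is a (possibly different) covariance splitting $\Sigma^{(n)}=\Sigma_1'\oplus\Sigma_2'$ such that $$\operatorname{rank}(\Sigma_1')=o(n),\quad \operatorname{Tr}\Sigma_2'=o(n),\quad \frac{\operatorname{Tr}\Sigma_2'}{\|\Sigma_2'\|_{op}}=\omega(n),\quad \frac{(\operatorname{Tr}\Sigma_2')^2}{\operatorname{Tr}((\Sigma_2')^2)}=\omega(n).$$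
   Context: Covariance splitting: $\Sigma=\Sigma_1\oplus\Sigma_2$ means $\Sigma=\Sigma_1+\Sigma_2$ with $\Sigma_1,\Sigma_2$ positive semidefinite and with orthogonal column spaces. $\|\cdot\|_{op}$ is the operator norm. *)

(* Defs.v *)
From HB Require Import structures.
From mathcomp Require Import all_boot all_order all_algebra.
From mathcomp Require Import all_classical all_reals.
From mathcomp Require Import topology normedtype.
Set Implicit Arguments. Unset Strict Implicit. Unset Printing Implicit Defensive.
Import Order.TTheory GRing.Theory Num.Theory.
Local Open Scope ring_scope.
Local Open Scope classical_set_scope.

Section Defs.
Variable R : realType.

Definition psd m (A : 'M[R]_m) : Prop :=
  A^T = A /\ forall v : 'cV[R]_m, 0 <= (v^T *m A *m v) 0 0.

Definition vnorm2 m (v : 'cV[R]_m) : R := Num.sqrt (\sum_i v i 0 ^+ 2).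

Definition opnorm m (A : 'M[R]_m) : R :=
  sup [set vnorm2 (A *m v) | v in [set v : 'cV[R]_m | vnorm2 v = 1]].

(* covariance splitting  S = S1 (+) S2 : S = S1 + S2, S1, S2 psd, and the
   column spaces of S1 and S2 are orthogonal (every column of S1 is
   orthogonal to every column of S2, i.e. S1^T S2 = 0). *)
Definition cov_splitting m (S S1 S2 : 'M[R]_m) : Prop :=
  [/\ S = S1 + S2, psd S1, psd S2 & S1^T *m S2 = 0].

Definition little_o_n (f : nat -> R) : Prop :=
  forall eps : R, 0 < eps -> \forall n \near \oo, `|f n| <= eps * n%:R.

Definition omega_n (f : nat -> R) : Prop :=
  forall C : R, 0 < C -> \forall n \near \oo, C * n%:R <= `|f n|.

End Defs.

(* Main.v *)
Require Import Defs.
From HB Require Import structures.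
From mathcomp Require Import all_boot all_order all_algebra.
From mathcomp Require Import all_classical all_reals.
From mathcomp Require Import topology normedtype.
From mathcomp Require Import complex ring lra.
Import Order.TTheory GRing.Theory Num.Theory.
Local Open Scope ring_scope.
Set Implicit Arguments. Unset Strict Implicit. Unset Printing Implicit Defensive.
Lemma sym_eigen (R : rcfType) n (A : 'M[R]_n.+1) : A^T = A ->
  exists k : R, exists2 v : 'rV[R]_n.+1, v *m A = k *: v & v != 0.
Proof.
move=> sA.
pose AC := map_mx (real_complex R) A.
have [a ea] := @eigenvalue_closed _ _ AC (ltn0Sn n).
have [z za z0] := eigenvalueP ea.
pose N := \sum_i z 0 i * (z 0 i)^*.
pose s := \sum_i \sum_j z 0 i * AC i j * (z 0 j)^*.
have sE : s = a * N.
  rewrite /s exchange_big /= /N mulr_sumr; apply: eq_bigr => j _.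
  rewrite -mulr_suml mulrA.
  by move/rowP: za => /(_ j); rewrite !mxE => ->.
have ACr i j : (AC i j)^* = AC i j by rewrite mxE; apply: conjc_real.
have ACs i j : AC i j = AC j i by rewrite !mxE -[A in LHS]sA mxE.
have sc : s^* = s.
  rewrite /s rmorph_sum /= exchange_big /=; apply: eq_bigr => i _.
  rewrite rmorph_sum /=; apply: eq_bigr => j _.
  by rewrite !rmorphM /= conjCK ACr ACs; ring.
have Nc : N^* = N.
  rewrite /N rmorph_sum; apply: eq_bigr => i _.
  by rewrite rmorphM /= conjCK mulrC.
have N0 : N != 0.
  apply: contra z0 => /eqP N0; apply/eqP/rowP => j; rewrite mxE.
  have := N0; rewrite /N => /eqP; rewrite psumr_eq0; last first.
    by move=> i _; rewrite mul_conjC_ge0.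
  by move=> /allP /(_ j (mem_index_enum _)) /=; rewrite mul_conjC_eq0 => /eqP.
have ar : a \is Num.real.
  rewrite CrealE; apply/eqP.
  have : (a * N)^* = a * N by rewrite -sE sc.
  rewrite rmorphM /= Nc => /(mulIf N0); by [].
have [k ak] := complex_realP _ ar.
exists k; apply/eigenvalueP.
have : eigenvalue AC (real_complex R k) by rewrite -ak.
by rewrite eigenvalue_map.
Qed.
Lemma rv_norm0 (R : realFieldType) m (v : 'rV[R]_m) : v *m v^T = 0 -> v = 0.
Proof.
move=> /matrixP /(_ 0 0); rewrite !mxE => /eqP.
rewrite psumr_eq0; last by move=> i _; rewrite mxE -expr2 sqr_ge0.
move=> /allP H; apply/rowP => i; rewrite mxE.
by have := H i (mem_index_enum _); rewrite /= mxE mulf_eq0 orbb => /eqP.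
Qed.

Lemma householder (R : realFieldType) m (u : 'rV[R]_(1+m)) :
  u *m u^T = 1%:M -> exists H : 'M[R]_(1+m),
  [/\ H^T = H, H *m H = 1%:M & row_mx 1%:M 0 *m H = u].
Proof.
move=> uu.
pose e0 : 'rV[R]_(1+m) := row_mx 1%:M 0.
have ee : e0 *m e0^T = 1%:M by rewrite tr_row_mx mul_row_col trmx1 mulmx1 trmx0 mulmx0 addr0.
pose w := e0 - u.
pose nw := (w *m w^T) 0 0.
pose c := 2 / nw.
pose W := w^T *m w.
have wwE : w *m w^T = nw%:M by apply: mx11_scalar.
have WW : W *m W = nw *: W.
  by rewrite /W mulmxA -[w^T *m w *m w^T]mulmxA wwE mul_mx_scalar scalemxAl.
have cc : c * c * nw = 2 * c.
  have [nw0|nz] := eqVneq nw 0; first by rewrite /c nw0 invr0 !mulr0.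
  by rewrite /c; field.
exists (1%:M - c *: W); split.
- by rewrite raddfB /= trmx1 linearZ /= /W trmx_mul trmxK.
- have -> : (1%:M - c *: W) *m (1%:M - c *: W) = 1%:M + (c * c * nw - 2 * c) *: W.
    rewrite mulmxBl !mulmxBr mul1mx mulmx1 -!scalemxAl -!scalemxAr WW !scalerA.
    rewrite mul1mx mulr_natl scalerBl -scalerMnl mulr2n.
    by rewrite opprB -addrA; congr (_ + _); rewrite addrCA opprD.
  by rewrite cc subrr scale0r addr0.
- rewrite -/e0.
  pose b := (e0 *m u^T) 0 0.
  have eu : e0 *m u^T = b%:M by apply: mx11_scalar.
  have ue : u *m e0^T = b%:M by rewrite -[u]trmxK -trmx_mul eu tr_scalar_mx.
  have sB (x y : R) : (x - y)%:M = x%:M - y%:M :> 'M[R]_1 by rewrite raddfB.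
  have ewE : e0 *m w^T = (1 - b)%:M.
    by rewrite /w raddfB /= mulmxBr ee eu sB.
  have nwE : nw = 2 * (1 - b).
    have : w *m w^T = (2 * (1 - b))%:M.
      rewrite /w raddfB /= mulmxBr !mulmxBl ee eu ue uu -!sB.
      by congr (_%:M); ring.
    by rewrite wwE => /matrixP /(_ 0 0); rewrite !mxE /= !mulr1n.
  rewrite mulmxBr mulmx1 -scalemxAr mulmxA ewE mul_scalar_mx scalerA.
  have [b1|b1] := eqVneq b 1.
    have w0 : w = 0.
      by apply: rv_norm0; rewrite wwE nwE b1 subrr mulr0 raddf0.
    rewrite w0 scaler0 subr0.
    by move/eqP: w0; rewrite subr_eq0 => /eqP.
  have -> : c * (1 - b) = 1.
    rewrite /c nwE; field; rewrite subr_eq0 eq_sym; exact: b1.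
  by rewrite scale1r /w opprB addrC subrK.
Qed.
Lemma real_spectral (R : rcfType) n (A : 'M[R]_n) : A^T = A ->
  exists (Q : 'M[R]_n) (d : 'rV[R]_n), Q *m Q^T = 1%:M /\ A = Q^T *m diag_mx d *m Q.
Proof.
elim: n A => [|m IH] A sA.
  exists 1%:M, 0; split; first by rewrite trmx1 mulmx1.
  by apply/matrixP => -[].
have [k [v vA v0]] := sym_eigen sA.
pose nv := (v *m v^T) 0 0.
have nvp : 0 < nv.
  rewrite lt_def; apply/andP; split.
    apply: contra v0 => /eqP nv0; apply/eqP/rv_norm0.
    by rewrite [v *m v^T]mx11_scalar -/nv nv0 raddf0.
  by rewrite /nv mxE sumr_ge0 // => i _; rewrite mxE -expr2 sqr_ge0.
pose u := (Num.sqrt nv)^-1 *: v.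
have uu : u *m u^T = 1%:M.
  rewrite /u linearZ /= -scalemxAl -scalemxAr scalerA [v *m v^T]mx11_scalar -/nv.
  rewrite scale_scalar_mx; congr (_%:M).
  rewrite -invfM -expr2 sqr_sqrtr ?ltW // mulVf //; exact: lt0r_neq0.
have uA : u *m A = k *: u by rewrite /u -scalemxAl vA !scalerA mulrC.
move: A sA u uu uA {vA v0 nvp}.
change (forall A : 'M[R]_(1 + m), A^T = A -> forall u : 'rV_(1 + m),
  u *m u^T = 1%:M -> u *m A = k *: u ->
  exists (Q : 'M_(1 + m)) (d : 'rV_(1 + m)), Q *m Q^T = 1%:M /\ A = Q^T *m diag_mx d *m Q).
move=> A sA u uu uA.
have [H [HT HH eH]] := householder uu.
pose B := H *m A *m H.
have BT : B^T = B by rewrite /B !trmx_mul HT sA mulmxA.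
pose e0 : 'rV[R]_(1+m) := row_mx 1%:M 0.
have eB : e0 *m B = k *: e0.
  by rewrite /B !mulmxA eH uA -scalemxAl -eH -mulmxA HH mulmx1.
have uB : usubmx B = row_mx k%:M 0.
  have := eB; rewrite -[B in LHS]vsubmxK /e0 mul_row_col mul1mx mul0mx addr0 => ->.
  by rewrite scale_row_mx scalemx1 scaler0.
have Bul : ulsubmx B = k%:M by rewrite /ulsubmx uB row_mxKl.
have Bur : ursubmx B = 0 by rewrite /ursubmx uB row_mxKr.
have Bdl : dlsubmx B = 0 by rewrite -BT -trmx_ursub Bur trmx0.
have sA' : (drsubmx B)^T = drsubmx B by rewrite trmx_drsub BT.
have [Q' [d' [QQ' AQ']]] := IH _ sA'.
pose P : 'M[R]_(1+m) := block_mx 1%:M 0 0 Q'.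
exists (P *m H), (row_mx k%:M d'); split.
  rewrite trmx_mul HT mulmxA -[P *m H *m H]mulmxA HH mulmx1.
  rewrite /P tr_block_mx mulmx_block !trmx0 trmx1 !mulmx0 !mul0mx !mulmx1 !addr0 add0r QQ'.
  by rewrite -scalar_mx_block.
have -> : A = H *m B *m H.
  by rewrite /B !mulmxA HH mul1mx -mulmxA HH mulmx1.
rewrite -[B]submxK Bul Bur Bdl AQ' trmx_mul HT !mulmxA; congr (_ *m _).
rewrite -!mulmxA; congr (_ *m _).
rewrite diag_mx_row /P tr_block_mx !mulmx_block !trmx0 trmx1.
rewrite !mulmx0 !mul0mx !mul1mx !mulmx1 !addr0 !add0r.
have -> : diag_mx (k%:M : 'rV[R]_1) = k%:M.
  by apply/matrixP => i j; rewrite !ord1 !mxE.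
by rewrite mulmx0.
Qed.
Section Aux.
Variable R : realType.

Lemma orthoTQ m (Q : 'M[R]_m) : Q *m Q^T = 1%:M -> Q^T *m Q = 1%:M.
Proof. exact: mulmx1C. Qed.

Lemma diag_mul m (a b : 'rV[R]_m) :
  diag_mx a *m diag_mx b = diag_mx (\row_i (a 0 i * b 0 i)).
Proof.
apply/matrixP => i j; rewrite mul_diag_mx !mxE.
by case: (i == j); rewrite ?mulr1n ?mulr0n ?mulr0.
Qed.

Lemma quad_diag m (d : 'rV[R]_m) (w : 'cV[R]_m) :
  (w^T *m diag_mx d *m w) 0 0 = \sum_i d 0 i * w i 0 ^+ 2.
Proof.
rewrite -mulmxA mul_diag_mx mxE; apply: eq_bigr => i _.
by rewrite !mxE; ring.
Qed.

Lemma conj_mul m (Q : 'M[R]_m) (a b : 'rV[R]_m) : Q *m Q^T = 1%:M ->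
  (Q^T *m diag_mx a *m Q) *m (Q^T *m diag_mx b *m Q)
  = Q^T *m diag_mx (\row_i (a 0 i * b 0 i)) *m Q.
Proof.
move=> QQ; rewrite -diag_mul !mulmxA; congr (_ *m _).
by rewrite -[_ *m Q *m Q^T]mulmxA QQ mulmx1.
Qed.

Lemma tr_conj m (Q : 'M[R]_m) (d : 'rV[R]_m) : Q *m Q^T = 1%:M ->
  \tr (Q^T *m diag_mx d *m Q) = \sum_i d 0 i.
Proof.
move=> QQ; rewrite mxtrace_mulC mulmxA QQ mul1mx mxtrace_diag; by [].
Qed.

Lemma conj_sym m (Q : 'M[R]_m) (d : 'rV[R]_m) :
  (Q^T *m diag_mx d *m Q)^T = Q^T *m diag_mx d *m Q.
Proof. by rewrite !trmx_mul trmxK tr_diag_mx mulmxA. Qed.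

Lemma quad_conj m (Q : 'M[R]_m) (d : 'rV[R]_m) (v : 'cV[R]_m) :
  (v^T *m (Q^T *m diag_mx d *m Q) *m v) 0 0 = \sum_i d 0 i * (Q *m v) i 0 ^+ 2.
Proof. by rewrite -quad_diag trmx_mul !mulmxA. Qed.

Lemma conj_psd m (Q : 'M[R]_m) (d : 'rV[R]_m) : (forall i, 0 <= d 0 i) ->
  psd (Q^T *m diag_mx d *m Q).
Proof.
move=> d0; split; first exact: conj_sym.
move=> v; rewrite quad_conj sumr_ge0 // => i _.
by rewrite mulr_ge0 // sqr_ge0.
Qed.

Lemma psdD m (A B : 'M[R]_m) : psd A -> psd B -> psd (A + B).
Proof.
move=> [sA qA] [sB qB]; split; first by rewrite raddfD /= sA sB.
by move=> v; rewrite mulmxDr mulmxDl mxE addr_ge0.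
Qed.

Lemma vnorm2E m (v : 'cV[R]_m) : vnorm2 v = Num.sqrt ((v^T *m v) 0 0).
Proof.
rewrite /vnorm2 mxE; congr Num.sqrt; apply: eq_bigr => i _.
by rewrite mxE expr2.
Qed.

Lemma rank_diag_le m (d : 'rV[R]_m) :
  (\rank (diag_mx d) <= #|[pred i | d 0%R i != 0%R]|)%N.
Proof.
rewrite diag_mx_sum_delta (bigID (fun i => d 0%R i != 0%R)) /=.
rewrite [X in (_ + X)%R]big1 ?addr0; last by move=> i /negbNE /eqP ->; rewrite scale0r.
rewrite -sum1_card.
elim/big_ind2: _ => //.
- by rewrite mxrank0.
- by move=> A a B b hA hB; apply: leq_trans (mxrank_add _ _) (leq_add hA hB).
- by move=> i _; apply: leq_trans (mxrank_scale _ _) _; rewrite mxrank_delta.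
Qed.

End Aux.
Section Op.
Variable R : realType.
Local Open Scope classical_set_scope.

Lemma sq_sum m (w : 'cV[R]_m) : (w^T *m w) 0 0 = \sum_i w i 0 ^+ 2.
Proof. by rewrite mxE; apply: eq_bigr => i _; rewrite mxE expr2. Qed.

Lemma vnorm2_sq m (v : 'cV[R]_m) : vnorm2 v ^+ 2 = (v^T *m v) 0 0.
Proof.
rewrite vnorm2E sqr_sqrtr // sq_sum sumr_ge0 // => i _; exact: sqr_ge0.
Qed.

Lemma conj_bound m (Q : 'M[R]_m) (d : 'rV[R]_m) t (v : 'cV[R]_m) :
  Q *m Q^T = 1%:M -> 0 <= t -> (forall i, `|d 0 i| <= t) -> vnorm2 v = 1 ->
  vnorm2 ((Q^T *m diag_mx d *m Q) *m v) <= t.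
Proof.
move=> QQ t0 dt v1.
have vv : (v^T *m v) 0 0 = 1 by rewrite -vnorm2_sq v1 expr1n.
rewrite vnorm2E -(ger0_norm t0) -sqrtr_sqr ler_sqrt ?sqr_ge0 //.
rewrite trmx_mul conj_sym mulmxA -[_ *m _ *m (Q^T *m _ *m Q)]mulmxA conj_mul //.
rewrite quad_conj.
have -> : t ^+ 2 = \sum_i t ^+ 2 * (Q *m v) i 0 ^+ 2.
  rewrite -mulr_sumr -sq_sum trmx_mul mulmxA -[v^T *m Q^T *m Q]mulmxA orthoTQ //.
  by rewrite mulmx1 vv mulr1.
apply: ler_sum => i _; rewrite mxE ler_wpM2r ?sqr_ge0 //.
apply: le_trans (ler_norm _) _; rewrite normrM expr2; exact: ler_pM.
Qed.

Lemma opnorm_conj_le m (Q : 'M[R]_m) (d : 'rV[R]_m) t :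
  Q *m Q^T = 1%:M -> 0 <= t -> (forall i, `|d 0 i| <= t) ->
  opnorm (Q^T *m diag_mx d *m Q) <= t.
Proof.
move=> QQ t0 dt; rewrite /opnorm.
set E := [set _ | _ in _].
have [ne|e0] := pselect (E !=set0); last first.
  have -> : E = set0 by apply/seteqP; split => x // Ex; apply: e0; exists x.
  by rewrite sup0.
apply: ge_sup => // _ [v v1 <-]; exact: conj_bound.
Qed.

Lemma opnorm_conj_ge m (Q : 'M[R]_m) (d : 'rV[R]_m) t i :
  Q *m Q^T = 1%:M -> 0 <= t -> (forall i, `|d 0 i| <= t) ->
  `|d 0 i| <= opnorm (Q^T *m diag_mx d *m Q).
Proof.
move=> QQ t0 dt; rewrite /opnorm.
set E := [set _ | _ in _].
pose v : 'cV[R]_m := Q^T *m delta_mx i 0.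
have v1 : vnorm2 v = 1.
  rewrite vnorm2E /v trmx_mul trmxK mulmxA -[_ *m Q *m Q^T]mulmxA QQ mulmx1.
  by rewrite trmx_delta mul_delta_mx mxE !eqxx sqrtr1.
have Ev : E `|d 0 i|.
  exists v => //.
  have -> : (Q^T *m diag_mx d *m Q) *m v = d 0 i *: v.
    rewrite /v -!mulmxA [Q *m (Q^T *m _)]mulmxA QQ mul1mx scalemxAr; congr (_ *m _).
    apply/matrixP => a b; rewrite mul_diag_mx !mxE ord1.
    by case: (a == i) / eqP => [->|]; rewrite ?mulr1 ?mulr0.
  have tZ : (d 0 i *: v)^T = d 0 i *: v^T by apply/matrixP => a b; rewrite !mxE.
  rewrite vnorm2E tZ -scalemxAl -scalemxAr scalerA mxE -vnorm2_sq v1 expr1n.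
  by rewrite mulr1 -expr2 sqrtr_sqr.
apply: sup_upper_bound => //; split; first by exists (`|d 0 i|).
by exists t => _ [w w1 <-]; exact: conj_bound.
Qed.
End Op.
Section Th.
Variable R : realType.

Lemma thresh m (S S1 S2 : 'M[R]_m) (t : R) : 0 < t -> cov_splitting S S1 S2 ->
  exists T1 T2 : 'M[R]_m, [/\ cov_splitting S T1 T2,
    (\rank T1)%:R <= (\rank S1)%:R + \tr (S2 *m S2) / t ^+ 2,
    \tr S2 - \tr (S2 *m S2) / t <= \tr T2 /\ 0 <= \tr T2 <= \tr S2,
    opnorm T2 <= t /\ (0 < \tr T2 -> 0 < opnorm T2)
  & [/\ 0 < \tr T2 -> 0 < \tr (T2 *m T2), \tr (T2 *m T2) <= \tr (S2 *m S2)
       & 0 <= \tr (S2 *m S2)]].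
Proof.
move=> t0 [eS pS1 pS2 orth].
have t0' : 0 <= t by exact: ltW.
have [Q [d [QQ S2E]]] := real_spectral pS2.1.
have d0 i : 0 <= d 0 i.
  have := pS2.2 (Q^T *m delta_mx i 0).
  rewrite S2E quad_conj mulmxA QQ mul1mx (bigD1 i) //= big1 ?addr0.
    by rewrite mxE !eqxx expr1n mulr1.
  by move=> j ji; rewrite mxE (negbTE ji) /= expr0n /= mulr0.
pose keep i := d 0 i <= t.
pose d2 : 'rV[R]_m := \row_i (if keep i then d 0 i else 0).
pose d1 : 'rV[R]_m := \row_i (if keep i then 0 else d 0 i).
pose ee : 'rV[R]_m := \row_i (if keep i then 1 else 0).
pose M1 := Q^T *m diag_mx d1 *m Q.
pose M2 := Q^T *m diag_mx d2 *m Q.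
have d10 i : 0 <= d1 0 i by rewrite mxE; case: ifP.
have d20 i : 0 <= d2 0 i by rewrite mxE; case: ifP.
have S2M : S2 = M1 + M2.
  rewrite S2E /M1 /M2 -mulmxDl -mulmxDr; congr (_ *m _ *m _).
  by apply/matrixP => a b; rewrite !mxE; case: (a == b); case: ifP; rewrite ?mulr1n ?mulr0n ?addr0 ?add0r.
have M12 : M1 *m M2 = 0.
  rewrite conj_mul //.
  have -> : (\row_i (d1 0 i * d2 0 i) : 'rV[R]_m) = 0.
    by apply/rowP => i; rewrite !mxE; case: ifP; rewrite ?mul0r ?mulr0.
  by rewrite raddf0 mulmx0 mul0mx.
have M2E : M2 = S2 *m (Q^T *m diag_mx ee *m Q).
  rewrite S2E conj_mul //; congr (_ *m diag_mx _ *m _).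
  by apply/rowP => i; rewrite !mxE; case: ifP; rewrite ?mulr1 ?mulr0.
have sq : \tr (S2 *m S2) = \sum_i d 0 i ^+ 2.
  by rewrite S2E conj_mul // tr_conj //; apply: eq_bigr => i _; rewrite mxE expr2.
have trS2 : \tr S2 = \sum_i d 0 i by rewrite S2E tr_conj.
have trT2 : \tr M2 = \sum_i d2 0 i by rewrite tr_conj.
have sqT2 : \tr (M2 *m M2) = \sum_i d2 0 i ^+ 2.
  by rewrite conj_mul // tr_conj //; apply: eq_bigr => i _; rewrite mxE expr2.
have d2t i : `|d2 0 i| <= t.
  by rewrite ger0_norm // mxE; case: ifP.
have pos2 : 0 < \tr M2 -> exists i, 0 < d2 0 i.
  rewrite trT2 => h.
  have /existsP [i hi] : [exists i, 0 < d2 0 i].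
    apply: contraLR h => /existsPn H; rewrite -leNgt; apply: sumr_le0 => i _.
    by rewrite leNgt; exact: H.
  by exists i.
exists (S1 + M1), M2; split.
- split.
  + by rewrite eS S2M addrA.
  + by apply: psdD => //; exact: conj_psd.
  + exact: conj_psd.
  + rewrite raddfD /= mulmxDl conj_sym M12 addr0 M2E mulmxA orth mul0mx //.
- have r1 : (\rank (S1 + M1)%R <= \rank S1 + #|[pred i | d1 0%R i != 0%R]|)%N.
    apply: leq_trans (mxrank_add _ _) _; rewrite leq_add2l /M1.
    apply: leq_trans (mxrankM_maxl _ _) _.
    apply: leq_trans (mxrankM_maxr _ _) _; exact: rank_diag_le.
  apply: (@le_trans _ _ ((\rank S1 + #|[pred i | d1 0%R i != 0%R]|)%N)%:R); first by rewrite ler_nat.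
  rewrite natrD lerD2l -sum1_card natr_sum big_mkcond /= sq mulr_suml.
  apply: ler_sum => i _; rewrite inE; case: ifP => h; last first.
    by rewrite divr_ge0 ?sqr_ge0.
  rewrite ler_pdivlMr ?exprn_gt0 // mul1r.
  move: h; rewrite mxE; case: ifP => [_ /eqP //|].
  rewrite /keep => /negbT; rewrite -ltNge => hk _.
  by rewrite ler_sqr ?nnegrE ?d0 //; exact: ltW.
- split.
    rewrite trS2 trT2 sq lerBlDr mulr_suml -big_split /=; apply: ler_sum => i _.
    rewrite mxE; case: ifP => hk.
      by rewrite lerDl divr_ge0 ?sqr_ge0.
    rewrite add0r ler_pdivlMr // expr2 ler_wpM2l //.
    by move: hk; rewrite /keep => /negbT; rewrite -ltNge => /ltW.
  rewrite trT2 trS2 sumr_ge0 //=; apply: ler_sum => i _.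
  by rewrite mxE; case: ifP.
- split; first exact: opnorm_conj_le.
  move=> /pos2 [i hi]; apply: lt_le_trans (opnorm_conj_ge i QQ t0' d2t).
  by rewrite gtr0_norm.
- split.
    move=> /pos2 [i hi]; rewrite sqT2 (bigD1 i) //=.
    by rewrite ltr_pwDl ?exprn_gt0 // sumr_ge0 // => j _; rewrite sqr_ge0.
  rewrite sqT2 sq; apply: ler_sum => i _; rewrite mxE; case: ifP => _ //.
    by rewrite expr0n /= sqr_ge0.
  by rewrite sq sumr_ge0 // => i _; rewrite sqr_ge0.
Qed.
End Th.
Section RealL.
Variable R : realType.

Lemma root_le n (L x : R) : (0 < n)%N -> 0 <= L -> 0 <= x -> L ^+ n <= x ^+ n -> L <= x.
Proof. by move=> n0 L0 x0; rewrite ler_pXn2r. Qed.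

Lemma dl_facts (s q nn : R) : 0 < s -> 0 < q -> 0 < nn ->
  let dl := Num.sqrt (Num.sqrt (s ^+ 2 / q / nn)) in
  [/\ 0 < dl, dl ^+ 4 = s ^+ 2 / q / nn, 0 < s / (dl * nn),
      q / (s / (dl * nn)) ^+ 2 = nn / dl ^+ 2 & q / (s / (dl * nn)) = s / dl ^+ 3].
Proof.
move=> s0 q0 n0 dl.
have g0 : 0 < s ^+ 2 / q / nn by rewrite !divr_gt0 // exprn_gt0.
have dl0 : 0 < dl by rewrite /dl !sqrtr_gt0.
have e4 : dl ^+ 4 = s ^+ 2 / q / nn.
  rewrite (_ : 4%N = (2 * 2)%N) // exprM /dl sqr_sqrtr ?sqrtr_ge0 // sqr_sqrtr //.
  exact: ltW.
have qE : q = s ^+ 2 / (dl ^+ 4 * nn).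
  rewrite e4; field; apply/and3P; split; apply: lt0r_neq0 => //; exact: exprn_gt0.
have dn : dl != 0 by exact: lt0r_neq0.
have sn : s != 0 by exact: lt0r_neq0.
have nnn : nn != 0 by exact: lt0r_neq0.
split => //.
- by rewrite divr_gt0 // mulr_gt0.
- by rewrite qE; field; rewrite dn sn nnn.
- by rewrite qE; field; rewrite dn sn nnn.
Qed.

Lemma half_bound (s dl trT : R) : 0 < s -> 2 <= dl -> s - s / dl ^+ 3 <= trT -> s / 2 <= trT.
Proof.
move=> s0 d2 h; apply: le_trans h.
have d0 : 0 < dl by apply: lt_le_trans d2; lra.
have h8 : 2 ^+ 3 <= dl ^+ 3 by rewrite lerXn2r // nnegrE; lra.
have h8' : (8 : R) <= dl ^+ 3 by apply: le_trans h8; rewrite !exprS expr0; lra.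
have : s / dl ^+ 3 <= s / 8.
  by rewrite ler_pM2l // lef_pV2 // posrE ?exprn_gt0 //; lra.
lra.
Qed.

Lemma bound_op (s dl nn C trT op : R) : 0 < s -> 0 < nn -> 0 <= C ->
  2 * (1 + C) <= dl -> s - s / dl ^+ 3 <= trT -> (0 < trT -> 0 < op) ->
  op <= s / (dl * nn) -> C * nn <= `|trT / op|.
Proof.
move=> s0 n0 C0 dC htr hop hle.
have d2 : 2 <= dl by apply: le_trans dC; lra.
have d0 : 0 < dl by apply: lt_le_trans d2; lra.
have th := half_bound s0 d2 htr.
have t0 : 0 < trT by apply: lt_le_trans th; lra.
have o0 := hop t0.
rewrite ger0_norm; last by rewrite divr_ge0 // ltW.
have st0 : 0 < s / (dl * nn) by rewrite divr_gt0 // mulr_gt0.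
apply: (@le_trans _ _ (trT / (s / (dl * nn)))); last first.
  by rewrite ler_pM2l // lef_pV2 // posrE.
have -> : trT / (s / (dl * nn)) = trT * dl * nn / s.
  by field; rewrite !lt0r_neq0.
rewrite ler_pdivlMr //.
have h1 : C * nn * s <= s / 2 * dl * nn.
  rewrite -subr_ge0.
  have -> : s / 2 * dl * nn - C * nn * s = s * nn * (dl / 2 - C) by field.
  by rewrite !mulr_ge0 ?ltW //; lra.
apply: le_trans h1 _.
by apply: ler_wpM2r; [exact: ltW | apply: ler_wpM2r; [exact: ltW | exact: th]].
Qed.

Lemma bound_ratio (s q dl trT sq2 C nn : R) : 0 < s -> 0 < q -> 2 <= dl ->
  s - s / dl ^+ 3 <= trT -> (0 < trT -> 0 < sq2) -> sq2 <= q ->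
  4 * C * nn <= s ^+ 2 / q -> C * nn <= `|trT ^+ 2 / sq2|.
Proof.
move=> s0 q0 d2 htr hsq hq hr.
have th := half_bound s0 d2 htr.
have t0 : 0 < trT by apply: lt_le_trans th; lra.
have sq0 := hsq t0.
rewrite ger0_norm; last by rewrite divr_ge0 ?sqr_ge0 // ltW.
apply: (@le_trans _ _ ((s / 2) ^+ 2 / q)).
  have -> : (s / 2) ^+ 2 / q = (s ^+ 2 / q) / 4 by field; rewrite lt0r_neq0.
  by rewrite ler_pdivlMr //; lra.
apply: (@le_trans _ _ (trT ^+ 2 / q)).
  rewrite ler_pM2r ?invr_gt0 //; rewrite ler_pXn2r // nnegrE ?ltW //.
  by rewrite divr_gt0.
by rewrite ler_pM2l ?exprn_gt0 // lef_pV2.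
Qed.

Lemma bound_rank (e nn dl : R) : 0 < e -> 0 < nn -> 0 < dl ->
  (2 / e) ^+ 2 <= dl ^+ 4 -> nn / dl ^+ 2 <= e / 2 * nn.
Proof.
move=> e0 n0 d0 h.
have h2 : 2 / e <= dl ^+ 2.
  apply: (@root_le 2) => //; first by rewrite divr_ge0 // ltW.
    exact: sqr_ge0.
  by rewrite -exprM.
rewrite mulrC ler_pM2r // -[e / 2]invf_div lef_pV2 // posrE ?divr_gt0 ?exprn_gt0 //.
Qed.
End RealL.
Local Open Scope classical_set_scope.
Theorem theorem8 (R : realType) (d : nat -> nat)
  (Sigma : forall n : nat, 'M[R]_(d n))
  (hpsd : forall n, psd (Sigma n))
  (S1 S2 : forall n : nat, 'M[R]_(d n))
  (hsplit : forall n, cov_splitting (Sigma n) (S1 n) (S2 n))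
  (hrank : little_o_n (R:=R) (fun n => (\rank (S1 n))%:R))
  (htr : little_o_n (R:=R) (fun n => \tr (S2 n)))
  (heff : omega_n (R:=R) (fun n => (\tr (S2 n)) ^+ 2 / \tr (S2 n *m S2 n))) :
  exists (T1 T2 : forall n : nat, 'M[R]_(d n)),
    [/\ forall n, cov_splitting (Sigma n) (T1 n) (T2 n),
        little_o_n (R:=R) (fun n => (\rank (T1 n))%:R),
        little_o_n (R:=R) (fun n => \tr (T2 n)),
        omega_n (R:=R) (fun n => \tr (T2 n) / opnorm (T2 n))
      & omega_n (R:=R) (fun n => (\tr (T2 n)) ^+ 2 / \tr (T2 n *m T2 n))].
Proof.
pose s n := \tr (S2 n).
pose q n := \tr (S2 n *m S2 n).
pose dl n := Num.sqrt (Num.sqrt (s n ^+ 2 / q n / n%:R)).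
pose t0 n := s n / (dl n * n%:R).
pose t n := if 0 < t0 n then t0 n else 1.
have tpos n : 0 < t n by rewrite /t; case: ifP => //; rewrite ltr01.
have H n : exists p : 'M[R]_(d n) * 'M[R]_(d n), 
   [/\ cov_splitting (Sigma n) p.1 p.2,
    (\rank p.1)%:R <= (\rank (S1 n))%:R + q n / t n ^+ 2,
    s n - q n / t n <= \tr p.2 /\ 0 <= \tr p.2 <= s n,
    opnorm p.2 <= t n /\ (0 < \tr p.2 -> 0 < opnorm p.2)
  & [/\ 0 < \tr p.2 -> 0 < \tr (p.2 *m p.2), \tr (p.2 *m p.2) <= q n
       & 0 <= q n]].
  have [T1 [T2 h]] := thresh (tpos n) (hsplit n).
  by exists (T1, T2).
have [F FP] : exists F : forall n, 'M[R]_(d n) * 'M[R]_(d n),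
   forall n, [/\ cov_splitting (Sigma n) (F n).1 (F n).2,
    (\rank (F n).1)%:R <= (\rank (S1 n))%:R + q n / t n ^+ 2,
    s n - q n / t n <= \tr (F n).2 /\ 0 <= \tr (F n).2 <= s n,
    opnorm (F n).2 <= t n /\ (0 < \tr (F n).2 -> 0 < opnorm (F n).2)
  & [/\ 0 < \tr (F n).2 -> 0 < \tr ((F n).2 *m (F n).2), \tr ((F n).2 *m (F n).2) <= q n
       & 0 <= q n]].
  by exists (fun n => projT1 (cid (H n))) => n; exact: (projT2 (cid (H n))).
have ev K : 0 < K -> \forall n \near \oo,
    [/\ 0 < (n%:R : R), K * n%:R <= s n ^+ 2 / q n, 0 < s n, 0 < q n & t n = t0 n].
  move=> K0; apply: filterS2 (heff _ K0) (nbhs_infty_gt 0) => n hK n0.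
  have n0' : 0 < (n%:R : R) by rewrite ltr0n.
  have [_ _ [_ /andP [trp trs]] _ [_ _ q0]] := FP n.
  have r0 : 0 <= s n ^+ 2 / q n by rewrite divr_ge0 // sqr_ge0.
  rewrite ger0_norm // in hK.
  have rp : 0 < s n ^+ 2 / q n by apply: lt_le_trans hK; rewrite mulr_gt0.
  have qp : 0 < q n.
    rewrite lt_def q0 andbT; apply: contraTneq rp => ->.
    by rewrite invr0 mulr0 ltxx.
  have sp : 0 < s n.
    rewrite lt_def (le_trans trp trs) andbT; apply: contraTneq rp => ->.
    by rewrite expr0n /= mul0r ltxx.
  have [dl0 _ tp _ _] := dl_facts sp qp n0'.
  split => //; by rewrite /t -/(dl n) -/(t0 n) tp.
exists (fun n => (F n).1), (fun n => (F n).2); split.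
- by move=> n; have [] := FP n.
- move=> e e0.
  have e2 : 0 < e / 2 by rewrite divr_gt0.
  have K0 : 0 < (2 / e) ^+ 2 by rewrite exprn_gt0 // divr_gt0.
  apply: filterS2 (hrank _ e2) (ev _ K0) => n hr [n0 hK sp qp tE].
  have [_ hrk _ _ _] := FP n.
  rewrite tE /t0 in hrk.
  have [dl0 e4 tp qt2 qt] := dl_facts sp qp n0.
  rewrite qt2 in hrk.
  have Kd : (2 / e) ^+ 2 <= dl n ^+ 4 by rewrite e4 ler_pdivlMr.
  have hb := bound_rank e0 n0 dl0 Kd.
  rewrite ger0_norm ?ler0n //; apply: le_trans hrk _.
  have := ler_norm ((\rank (S1 n))%:R : R).
  lra.
- move=> e e0; apply: filterS (htr _ e0) => n hn.
  have [_ _ [_ /andP [trp trs]] _ _] := FP n.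
  rewrite ger0_norm //; apply: le_trans hn; apply: le_trans trs _; exact: ler_norm.
- move=> C C0.
  have K0 : 0 < (2 * (1 + C)) ^+ 4 by rewrite exprn_gt0 //; lra.
  apply: filterS (ev _ K0) => n [n0 hK sp qp tE].
  have [_ _ [hT _] [hop hop2] _] := FP n.
  rewrite tE /t0 in hT hop.
  have [dl0 e4 tp qt2 qt] := dl_facts sp qp n0.
  rewrite qt in hT.
  have Kd : (2 * (1 + C)) ^+ 4 <= dl n ^+ 4 by rewrite e4 ler_pdivlMr.
  have dC : 2 * (1 + C) <= dl n.
    apply: (@root_le R 4) => //; [lra | exact: ltW].
  exact: bound_op sp n0 (ltW C0) dC hT hop2 hop.
- move=> C C0.
  have K0 : 0 < 2 ^+ 4 + 4 * C by lra.
  apply: filterS (ev _ K0) => n [n0 hK sp qp tE].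
  have [_ _ [hT _] _ [hsq hq _]] := FP n.
  rewrite tE /t0 in hT.
  have [dl0 e4 tp qt2 qt] := dl_facts sp qp n0.
  rewrite qt in hT.
  have Cn : 0 <= 4 * C * n%:R by rewrite mulr_ge0 ?ltW //; lra.
  have Kd : 2 ^+ 4 <= dl n ^+ 4.
    rewrite e4 ler_pdivlMr //; apply: le_trans hK; lra.
  have d2 : 2 <= dl n.
    apply: (@root_le R 4) => //; exact: ltW.
  apply: bound_ratio sp qp d2 hT hsq hq _.
  apply: le_trans hK; lra.
Qed.
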